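(* Let $\mathbf{X}_-\in\mathbb{R}^{n\times T}$, $\mathbf{U}_-\in\mathbb{R}^{m\times T}$, $\mathbf{X}_+\in\mathbb{R}^{n\times T}$ be data generated by $\mathbf{X}_+=A_\ast\mathbf{X}_-+B_\ast\mathbf{U}_-+\mathbf{W}_-$ for some (unknown) $A_\ast\in\mathbb{R}^{n\times n}$, $B_\ast\in\mathbb{R}^{n\times m}$ and noise matrix $\mathbf{W}_-\in\mathbb{R}^{n\times T}$ satisfying \[ \begin{bmatrix} I\\ \mathbf{W}_-^\top\end{bmatrix}^\top\begin{bmatrix}\Phi_{11}&\Phi_{12}\\ \Phi_{12}^\top&\Phi_{22}\end{bmatrix}\begin{bmatrix} I\\ \mathbf{W}_-^\top\end{bmatrix}\succeq 0 \] for some $\Phi\in\mathbb{S}^{n+T}$ with $\Phi_{11}\succeq 0$ and $\Phi_{22}\prec 0$. Let $C\in\mathbb{R}^{q\times n}$, $D\in\mathbb{R}^{q\times m}$, $E\in\mathbb{R}^{n\times z}$, and let $\mathcal{S}\subseteq\mathbb{R}^{m\times n}$ be a subspace with representation matrix $S$. Consider the semidefinite program: minimize (infimize) $\gamma$ over $P\in\mathbb{S}^n$, $Q\in\mathbb{S}^q$, $R\in\Upsilon(S)$, $L\in\mathcal{S}$, $\alpha,\beta,\gamma\in\mathbb{R}$ subject to \[ \begin{bmatrix} P-EE^\top-\beta I & \mathbf{0} & \mathbf{0} & \mathbf{0}\\ \mathbf{0} & \mathbf{0} & \mathbf{0} & R\\ \mathbf{0} & \mathbf{0} & \mathbf{0}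 & L\\ \mathbf{0} & R^\top & L^\top & R+R^\top-P \end{bmatrix}-\alpha\begin{bmatrix}\Psi & \mathbf{0}\\ \mathbf{0} & \mathbf{0}\end{bmatrix}\succeq 0, \] \[ \begin{bmatrix} Q & CR+DL\\ (CR+DL)^\top & R+R^\top-P\end{bmatrix}\succeq 0,\qquad \operatorname{Tr}(Q)\le\gamma^2,\qquad \alpha\ge 0,\ \beta>0,\ \gamma\ge 0, \] where in the first matrix the block rows/columns have sizes $n,n,m,n$ and $\Psi\in\mathbb{S}^{2n+m}$ occupies the first three block rows/columns. If this program is feasible with optimal value $\gamma^\ast$ (attained by $(P,Q,R,L,\alpha,\beta,\gamma^\ast)$), then $K=LR^{-1}\in\mathcal{S}$ is a $\gamma^\ast$-suboptimal $H_2$ controller for every system $(A,B)\in\Sigma_{\mathcal{D}}$, i.e. for every system $x(t+1)=Ax(t)+Bu(t)+E\xi(t)$, $y(t)=Cx(t)+Du(t)$ with $(A,B)\in\Sigma_{\mathcal{D}}$.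
   Context: $\mathbb{S}^n$ denotes real symmetric $n\times n$ matrices. For a system $x(t+1)=Ax(t)+Bu(t)+E\xi(t)$, $y(t)=Cx(t)+Du(t)$ and a static feedback $u=Kx$, let $G_K(z)$ be the transfer function from $\xi$ to $y$ of the closed loop $x(t+1)=(A+BK)x(t)+E\xi(t)$, $y(t)=(C+DK)x(t)$; $K$ is a $\gamma$-suboptimal $H_2$ controller if $\|G_K(z)\|_{H_2}\le\gamma$. If $S_1,\dots,S_k\in\mathbb{R}^{m\times n}$ form a basis of $\mathcal{S}$, $S=[S_1\ \cdots\ S_k]\in\mathbb{R}^{m\times nk}$ is a representation matrix of $\mathcal{S}$, and $\Upsilon(S):=\{R\in\mathbb{R}^{n\times n}\mid\exists\Lambda\in\mathbb{S}^k:\ S(I_k\otimes R)=S(\Lambda\otimes I_n)\}$ ($\otimes$ the Kronecker product). Define \[ \Psi:=\begin{bmatrix} I & \mathbf{X}_+\\ \mathbf{0} & -\mathbf{X}_-\\ \mathbf{0} & -\mathbf{U}_-\end{bmatrix}^\top\Phi\begin{bmatrix} I & \mathbf{X}_+\\ \mathbf{0} & -\mathbf{X}_-\\ \mathbf{0} & -\mathbf{U}_-\end{bmatrix}\in\mathbb{S}^{2n+m}, \] and $\Sigma_{\mathcal{D}}:=\{(A,B)\mid [I\ \ A\ \ B]\,\Psi\,[I\ \ A\ \ B]^\top\succeq 0\}$, i.e. the set of $(A,B)\in\mathbb{R}^{n\times n}\times\mathbb{R}^{n\times m}$ with $\begin{bmatrix} I\\ A^\top\\ B^\top\end{bmatrix}^\top\Psi\begin{bmatrix}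 I\\ A^\top\\ B^\top\end{bmatrix}\succeq 0$. *)

(* Defs.v *)
From HB Require Import structures.
From mathcomp Require Import all_boot all_order all_algebra.
From mathcomp Require Import mxtens.
From mathcomp Require Import all_classical all_reals all_analysis.
Set Implicit Arguments.
Unset Strict Implicit.
Unset Printing Implicit Defensive.
Import Order.TTheory GRing.Theory Num.Theory.
Local Open Scope ring_scope.

Definition symmx {R : realType} {n : nat} (M : 'M[R]_n) : Prop := M^T = M.

Definition psdmx {R : realType} {n : nat} (M : 'M[R]_n) : Prop :=
  symmx M /\ forall v : 'cV[R]_n, 0 <= (v^T *m M *m v) 0 0.

Definition ndmx {R : realType} {n : nat} (M : 'M[R]_n) : Prop :=
  symmx M /\ forall v : 'cV[R]_n, v != 0 -> (v^T *m M *m v) 0 0 < 0.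

Definition linindep {R : realType} {m n k : nat} (Sb : 'I_k -> 'M[R]_(m, n)) : Prop :=
  forall c : 'I_k -> R, \sum_(i < k) c i *: Sb i = 0 -> forall i, c i = 0.

Definition spanmx {R : realType} {m n k : nat} (Sb : 'I_k -> 'M[R]_(m, n))
  (L : 'M[R]_(m, n)) : Prop :=
  exists c : 'I_k -> R, L = \sum_(i < k) c i *: Sb i.

(* representation matrix S = [S_1 ... S_k] in R^{m x nk} *)
Definition repmx {R : realType} {m n k : nat} (Sb : 'I_k -> 'M[R]_(m, n))
  : 'M[R]_(m, k * n) :=
  \matrix_(i < m, j < k * n) Sb (mxtens_unindex j).1 i (mxtens_unindex j).2.

Definition Upsilon {R : realType} {m n k : nat} (S : 'M[R]_(m, k * n))
  (Rm : 'M[R]_n) : Prop :=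
  exists Lam : 'M[R]_k, symmx Lam /\
    S *m ((1%:M : 'M[R]_k) *t Rm) = S *m (Lam *t (1%:M : 'M[R]_n)).

Definition datamx {R : realType} {n m T : nat}
  (Xm : 'M[R]_(n, T)) (Um : 'M[R]_(m, T)) (Xp : 'M[R]_(n, T))
  : 'M[R]_(n + n + m, n + T) :=
  col_mx (col_mx (row_mx 1%:M Xp) (row_mx 0 (- Xm))) (row_mx 0 (- Um)).

Definition Psimx {R : realType} {n m T : nat}
  (Xm : 'M[R]_(n, T)) (Um : 'M[R]_(m, T)) (Xp : 'M[R]_(n, T))
  (Phi : 'M[R]_(n + T)) : 'M[R]_(n + n + m) :=
  datamx Xm Um Xp *m Phi *m (datamx Xm Um Xp)^T.

Definition SigmaD {R : realType} {n m T : nat}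
  (Xm : 'M[R]_(n, T)) (Um : 'M[R]_(m, T)) (Xp : 'M[R]_(n, T))
  (Phi : 'M[R]_(n + T)) (A : 'M[R]_n) (B : 'M[R]_(n, m)) : Prop :=
  let IAB : 'M[R]_(n, n + n + m) := row_mx (row_mx 1%:M A) B in
  psdmx (IAB *m Psimx Xm Um Xp Phi *m IAB^T).

(* H2 norm of the closed loop x+ = (A+BK)x + E xi, y = (C+DK)x, whose transfer
   function G_K(z) = (C+DK)(zI - A - BK)^{-1} E = sum_{j>=1} (C+DK)(A+BK)^{j-1} E z^{-j}.
   ||G_K||_{H2}^2 = sum_{j>=0} Tr( M_j^T M_j ), M_j = (C+DK)(A+BK)^j E
   (extended-real series of nonnegative terms; +oo if G_K is not in H2). *)
Definition H2norm_sq {R : realType} {n m q z : nat}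
  (A : 'M[R]_n) (B : 'M[R]_(n, m)) (C : 'M[R]_(q, n)) (D : 'M[R]_(q, m))
  (E : 'M[R]_(n, z)) (K : 'M[R]_(m, n)) : \bar R :=
  (\sum_(0 <= j <oo)
     (\tr (((C + D *m K) *m (A + B *m K) ^+ j *m E)^T
            *m ((C + D *m K) *m (A + B *m K) ^+ j *m E)))%:E)%E.

Definition H2_subopt {R : realType} {n m q z : nat}
  (A : 'M[R]_n) (B : 'M[R]_(n, m)) (C : 'M[R]_(q, n)) (D : 'M[R]_(q, m))
  (E : 'M[R]_(n, z)) (K : 'M[R]_(m, n)) (gamma : R) : Prop :=
  0 <= gamma /\ (H2norm_sq A B C D E K <= (gamma ^+ 2)%:E)%E.

Definition sdp_feasible {R : realType} {n m q z T k : nat}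
  (Xm : 'M[R]_(n, T)) (Um : 'M[R]_(m, T)) (Xp : 'M[R]_(n, T))
  (Phi : 'M[R]_(n + T)) (C : 'M[R]_(q, n)) (D : 'M[R]_(q, m))
  (E : 'M[R]_(n, z)) (Sb : 'I_k -> 'M[R]_(m, n))
  (P : 'M[R]_n) (Q : 'M[R]_q) (Rm : 'M[R]_n) (L : 'M[R]_(m, n))
  (alpha beta gamma : R) : Prop :=
  let Psi := Psimx Xm Um Xp Phi in
  let M11 : 'M[R]_(n + n + m) :=
    block_mx (block_mx (P - E *m E^T - beta%:M) 0 0 0) 0 0 0 in
  let M12 : 'M[R]_(n + n + m, n) := col_mx (col_mx 0 Rm) L in
  let Big : 'M[R]_(n + n + m + n) :=
    block_mx M11 M12 M12^T (Rm + Rm^T - P) in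
  let N := C *m Rm + D *m L in
  [/\ symmx P, symmx Q, Upsilon (repmx Sb) Rm & spanmx Sb L] /\
  [/\ psdmx (Big - alpha *: block_mx Psi 0 0 (0 : 'M[R]_n)),
      psdmx (block_mx Q N N^T (Rm + Rm^T - P)),
      \tr Q <= gamma ^+ 2 &
      [/\ 0 <= alpha, 0 < beta & 0 <= gamma]].

(* Main.v *)
Set Warnings "-all".
Require Import Defs.
From HB Require Import structures.
From mathcomp Require Import all_boot all_order all_algebra.
From mathcomp Require Import mxtens.
From mathcomp Require Import all_classical all_reals all_analysis.
From mathcomp Require Import lra.
Import Order.TTheory GRing.Theory Num.Theory.
Local Open Scope ring_scope.

Section Helpers.
Context {R : realType}.

Definition qf {p} (v : 'cV[R]_p) (M : 'M[R]_p) : R := (v^T *m M *m v) 0 0.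

Lemma entryD {p r} (A B : 'M[R]_(p, r)) i j : (A + B) i j = A i j + B i j.
Proof. by rewrite mxE. Qed.
Lemma entry0 {p r} i j : (0 : 'M[R]_(p, r)) i j = 0.
Proof. by rewrite mxE. Qed.
Lemma entryN {p r} (A : 'M[R]_(p, r)) i j : (- A) i j = - A i j.
Proof. by rewrite mxE. Qed.
Lemma entryZ {p r} (a : R) (A : 'M[R]_(p, r)) i j : (a *: A) i j = a * A i j.
Proof. by rewrite mxE. Qed.

Lemma qfT {p r} (a : 'cV[R]_p) (b : 'cV[R]_r) (M : 'M[R]_(p, r)) :
  (a^T *m M *m b) 0 0 = (b^T *m M^T *m a) 0 0.
Proof.
have -> : b^T *m M^T *m a = (a^T *m M *m b)^T by rewrite !trmx_mul trmxK mulmxA.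
by rewrite [RHS]mxE.
Qed.

Lemma sqn_ge0 {p} (v : 'cV[R]_p) : 0 <= (v^T *m v) 0 0.
Proof.
rewrite mxE; apply: sumr_ge0 => i _; rewrite mxE -expr2; exact: sqr_ge0.
Qed.

Lemma sqn_eq0 {p} (v : 'cV[R]_p) : (v^T *m v) 0 0 = 0 -> v = 0.
Proof.
rewrite mxE => /eqP; rewrite psumr_eq0 => [/allP H|i _]; last first.
  by rewrite mxE -expr2 sqr_ge0.
apply/matrixP => i j; rewrite (ord1 j) !mxE.
have := H i (mem_index_enum i); rewrite mxE -expr2 sqrf_eq0 => /eqP ->//.
Qed.

Lemma qf_block {p r} (x : 'cV[R]_p) (y : 'cV[R]_r) a b c d :
  (col_mx x y)^T *m block_mx a b c d *m col_mx x y =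
  x^T *m a *m x + x^T *m b *m y + (y^T *m c *m x + y^T *m d *m y).
Proof.
by rewrite tr_col_mx mul_row_block mul_row_col !mulmxDl addrACA.
Qed.

Lemma schur_step {p n} (Q0 : 'M[R]_p) (G : 'M[R]_(p, n)) (P Rm : 'M[R]_n) :
  (forall x y, 0 <= qf (col_mx x y) (block_mx Q0 (G *m Rm) (G *m Rm)^T (Rm + Rm^T - P))) ->
  symmx P -> (forall v, 0 <= qf v P) -> Rm \in unitmx ->
  forall x, qf x (G *m P *m G^T) <= qf x Q0.
Proof.
move=> H sP pP uR x.
set u := G^T *m x.
set y := - (invmx Rm *m (P *m u)).
have Ry : Rm *m y = - (P *m u) by rewrite /y mulmxN mulmxA mulmxV // mul1mx.
clearbody y.
have h2 := H x y; rewrite /qf qf_block !entryD in h2.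
have e2 : (x^T *m (G *m Rm) *m y) 0 0 = - (u^T *m P *m u) 0 0.
  by rewrite mulmxA -mulmxA Ry /u trmx_mul trmxK mulmxN -mulmxA entryN.
have e3 : (y^T *m (G *m Rm)^T *m x) 0 0 = - (u^T *m P *m u) 0 0.
  by rewrite qfT trmxK.
have r1 : (y^T *m Rm *m y) 0 0 = - (y^T *m P *m u) 0 0.
  by rewrite -mulmxA Ry mulmxN entryN mulmxA.
have r2 : (y^T *m Rm^T *m y) 0 0 = (y^T *m Rm *m y) 0 0 by rewrite qfT trmxK.
rewrite e2 e3 !mulmxDr !mulmxDl !entryD mulmxN mulNmx entryN r2 r1 in h2.
have e5 : (x^T *m (G *m P *m G^T) *m x) 0 0 = (u^T *m P *m u) 0 0.
  by rewrite /u trmx_mul trmxK !mulmxA.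
have h1 := pP (u + y); rewrite /qf [(u + y)^T]linearD /= !mulmxDl !mulmxDr !entryD in h1.
have e6 : (u^T *m P *m y) 0 0 = (y^T *m P *m u) 0 0 by rewrite qfT sP.
rewrite e6 in h1; rewrite /qf e5; lra.
Qed.


Lemma qfD {p} (x : 'cV[R]_p) (A B : 'M[R]_p) : qf x (A + B) = qf x A + qf x B.
Proof. by rewrite /qf mulmxDr mulmxDl entryD. Qed.
Lemma qfN {p} (x : 'cV[R]_p) (A : 'M[R]_p) : qf x (- A) = - qf x A.
Proof. by rewrite /qf mulmxN mulNmx entryN. Qed.
Lemma qfB {p} (x : 'cV[R]_p) (A B : 'M[R]_p) : qf x (A - B) = qf x A - qf x B.
Proof. by rewrite qfD qfN. Qed.
Lemma qfZ {p} (x : 'cV[R]_p) a (A : 'M[R]_p) : qf x (a *: A) = a * qf x A.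
Proof. by rewrite /qf -scalemxAr -scalemxAl entryZ. Qed.
Lemma qf_sum {p} (x : 'cV[R]_p) N (F : 'I_N -> 'M[R]_p) :
  qf x (\sum_(j < N) F j) = \sum_(j < N) qf x (F j).
Proof. by rewrite /qf mulmx_sumr mulmx_suml summxE. Qed.
Lemma qf_mul {p r} (x : 'cV[R]_p) (G : 'M[R]_(p, r)) (M : 'M[R]_r) :
  qf x (G *m M *m G^T) = qf (G^T *m x) M.
Proof. by rewrite /qf trmx_mul trmxK !mulmxA. Qed.
Lemma qf_gram {p r} (x : 'cV[R]_p) (G : 'M[R]_(p, r)) : 0 <= qf x (G *m G^T).
Proof.
have -> : qf x (G *m G^T) = ((G^T *m x)^T *m (G^T *m x)) 0 0.
  by rewrite /qf trmx_mul trmxK !mulmxA.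
exact: sqn_ge0.
Qed.

Lemma trace_le {p} (Y1 Y2 : 'M[R]_p) :
  (forall x, qf x Y1 <= qf x Y2) -> \tr Y1 <= \tr Y2.
Proof.
move=> H; rewrite /mxtrace; apply: ler_sum => i _.
have := H (delta_mx i 0); rewrite /qf trmx_delta -!mulmxA -!colE -!rowE.
by rewrite !mxE.
Qed.

Lemma stein {n z} (A P : 'M[R]_n) (E : 'M[R]_(n, z)) :
  (forall v, 0 <= qf v P) ->
  (forall x, qf x (A *m P *m A^T + E *m E^T) <= qf x P) ->
  forall N x, qf x (\sum_(j < N) (A ^+ j *m E) *m (A ^+ j *m E)^T) <= qf x P.
Proof.
move=> pP H N.
suff: forall x, qf x (A ^+ N *m P *m (A ^+ N)^T +
         \sum_(j < N) (A ^+ j *m E) *m (A ^+ j *m E)^T) <= qf x P.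
  move=> H1 x; apply: le_trans (H1 x); rewrite qfD qf_mul lerDr; exact: pP.
elim: N => [|N IH] x.
  by rewrite big_ord0 addr0 expr0 -idmxE mul1mx trmx1 mulmx1.
rewrite big_ord_recr /= addrA qfD.
have -> : A ^+ N.+1 = A ^+ N *m A by rewrite exprSr mulmxE.
apply: le_trans (IH x); rewrite !qfD.
have e1 : qf x (A ^+ N *m A *m P *m (A ^+ N *m A)^T)
        = qf ((A ^+ N)^T *m x) (A *m P *m A^T).
  by rewrite qf_mul qf_mul trmx_mul mulmxA.
have e2 : qf x (A ^+ N *m E *m (A ^+ N *m E)^T)
        = qf ((A ^+ N)^T *m x) (E *m E^T).
  by rewrite /qf !trmx_mul !trmxK !mulmxA.
have H' := H ((A ^+ N)^T *m x); rewrite qfD in H'.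
rewrite e1 e2; rewrite [qf x (A ^+ N *m P *m _)]qf_mul; lra.
Qed.


Lemma qf1 {p} (v : 'cV[R]_p) : qf v 1%:M = (v^T *m v) 0 0.
Proof. by rewrite /qf mulmx1. Qed.
Lemma qf_scal {p} (v : 'cV[R]_p) a : qf v a%:M = a * (v^T *m v) 0 0.
Proof. by rewrite -scalemx1 qfZ qf1. Qed.

Lemma qf_col0 {p r} (x : 'cV[R]_p) a b c (d : 'M[R]_r) :
  qf (col_mx x 0) (block_mx a b c d) = qf x a.
Proof. by rewrite /qf qf_block trmx0 !mulmx0 !mul0mx !entryD !entry0 !addr0. Qed.
Lemma qf_0col {p r} (y : 'cV[R]_r) (a : 'M[R]_p) b c d :
  qf (col_mx 0 y) (block_mx a b c d) = qf y d.
Proof. by rewrite /qf qf_block trmx0 !mulmx0 !mul0mx !entryD !entry0 !add0r. Qed.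

Lemma lmi_pos {n r} (P Rm : 'M[R]_n) (E : 'M[R]_(n, r)) (N : 'M[R]_n) (beta : R) :
  0 < beta ->
  (forall x y, 0 <= qf (col_mx x y)
      (block_mx (P - E *m E^T - beta%:M) N N^T (Rm + Rm^T - P))) ->
  (forall v, beta * (v^T *m v) 0 0 <= qf v P) /\ Rm \in unitmx.
Proof.
move=> b0 H.
have pos : forall v, beta * (v^T *m v) 0 0 <= qf v P.
  move=> v; have := H v 0; rewrite qf_col0 !qfB qf_scal.
  have := qf_gram v E; lra.
split => //.
rewrite -unitmx_tr unitmxE unitfE; apply/negP => /det0P [w wn0 wR].
have Ry : Rm *m w^T = 0 by rewrite -(trmxK Rm) -trmx_mul wR trmx0.
have := H 0 w^T; rewrite qf_0col !qfB qfD.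
have e1 : qf w^T Rm = 0 by rewrite /qf -mulmxA Ry mulmx0 mxE.
have e2 : qf w^T Rm^T = 0 by rewrite /qf -qfT.
rewrite e1 e2 => h.
have := pos w^T; have := sqn_ge0 w^T => h2 h3.
have h4 : (w^T^T *m w^T) 0 0 = 0 by nra.
move/sqn_eq0: h4 => /eqP; rewrite -trmx0 (inj_eq (@trmx_inj _ _ _)).
by rewrite (negbTE wn0).
Qed.


Lemma qf_blk0 {p r} (x : 'cV[R]_p) (y : 'cV[R]_r) (a : 'M[R]_p) :
  qf (col_mx x y) (block_mx a 0 0 (0 : 'M[R]_r)) = qf x a.
Proof. by rewrite /qf qf_block !mulmx0 !mul0mx !entryD !entry0 !addr0. Qed.

Lemma lmi_big {n m z} (Psi : 'M[R]_(n + n + m)) (P Rm : 'M[R]_n)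
  (L : 'M[R]_(m, n)) (E : 'M[R]_(n, z)) (alpha beta : R)
  (A : 'M[R]_n) (B : 'M[R]_(n, m)) :
  0 <= alpha ->
  psdmx (row_mx (row_mx 1%:M A) B *m Psi *m (row_mx (row_mx 1%:M A) B)^T) ->
  psdmx (block_mx (block_mx (block_mx (P - E *m E^T - beta%:M) 0 0 0) 0 0 0)
           (col_mx (col_mx 0 Rm) L) (col_mx (col_mx 0 Rm) L)^T (Rm + Rm^T - P)
         - alpha *: block_mx Psi 0 0 (0 : 'M[R]_n)) ->
  forall x y, 0 <= qf (col_mx x y)
    (block_mx (P - E *m E^T - beta%:M) (A *m Rm + B *m L) (A *m Rm + B *m L)^T
       (Rm + Rm^T - P)).
Proof.
move=> a0 [_ hS] [_ hB] x y.
set IAB := row_mx (row_mx 1%:M A) B.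
have := hB (col_mx (IAB^T *m x) y).
rewrite -/(qf _ _) qfB qfZ qf_blk0 -qf_mul.
have := hS x; rewrite -/(qf _ _) => hS1.
have ex : IAB^T *m x = col_mx (col_mx x (A^T *m x)) (B^T *m x).
  by rewrite /IAB !tr_row_mx trmx1 !mul_col_mx mul1mx.
have eM : (IAB^T *m x)^T *m col_mx (col_mx 0 Rm) L = x^T *m (A *m Rm + B *m L).
  by rewrite trmx_mul trmxK -mulmxA /IAB !mul_row_col mulmx0 add0r.
have hm := mulr_ge0 a0 hS1.
rewrite /qf !qf_block !entryD.
rewrite [(y^T *m (col_mx _ _)^T *m _) 0 0]qfT trmxK eM.
rewrite [(y^T *m (A *m Rm + B *m L)^T *m _) 0 0]qfT trmxK.
rewrite -/(qf (IAB^T *m x) _) ex !qf_blk0 /qf => h.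
move: hm; rewrite /qf => hm; rewrite /IAB in h; lra.
Qed.


Lemma sum_tens {k n} (F : 'I_(k * n) -> R) :
  \sum_l F l = \sum_(j < k) \sum_(c < n) F (mxtens_index (j, c)).
Proof.
rewrite pair_big /= (reindex (@mxtens_index k n)) /=; last first.
  by exists (@mxtens_unindex k n) => ? _; rewrite (mxtens_indexK, mxtens_unindexK).
by apply: eq_bigr => -[].
Qed.

Lemma repmxE {m n k} (Sb : 'I_k -> 'M[R]_(m, n)) a j c :
  repmx Sb a (@mxtens_index k n (j, c)) = Sb j a c.
Proof. by rewrite mxE mxtens_indexK. Qed.

Lemma ups_eq {m n k} (Sb : 'I_k -> 'M[R]_(m, n)) Rm (Lam : 'M[R]_k) :
  repmx Sb *m ((1%:M : 'M[R]_k) *t Rm) = repmx Sb *m (Lam *t (1%:M : 'M[R]_n)) ->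
  forall j, Sb j *m Rm = \sum_i Lam i j *: Sb i.
Proof.
move=> H j; apply/matrixP => a c.
have L1 : (repmx Sb *m ((1%:M : 'M[R]_k) *t Rm)) a (@mxtens_index k n (j, c))
          = (Sb j *m Rm) a c.
  rewrite !mxE sum_tens.
  under eq_bigr => j' _ do under eq_bigr => c' _ do rewrite repmxE tensmxE.
  rewrite (bigD1 j) //= [X in _ + X]big1 ?addr0 => [|j' nj].
    by apply: eq_bigr => c' _; rewrite mxE eqxx mulr1n mul1r.
  by apply: big1 => c' _; rewrite mxE (negbTE nj) mulr0n mul0r mulr0.
have L2 : (repmx Sb *m (Lam *t (1%:M : 'M[R]_n))) a (@mxtens_index k n (j, c))
          = (\sum_i Lam i j *: Sb i) a c.
  rewrite !mxE sum_tens summxE.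
  under eq_bigr => j' _ do under eq_bigr => c' _ do rewrite repmxE tensmxE.
  apply: eq_bigr => j' _; rewrite (bigD1 c) //= [X in _ + X]big1 ?addr0 => [|c' nc].
    by rewrite mxE eqxx mulr1n mulr1 mxE mulrC.
  by rewrite mxE (negbTE nc) mulr0n !mulr0.
by rewrite -L1 -L2 H.
Qed.


Lemma span_inv {m n k} (Sb : 'I_k -> 'M[R]_(m, n)) Rm L :
  linindep Sb -> Upsilon (repmx Sb) Rm -> spanmx Sb L -> Rm \in unitmx ->
  spanmx Sb (L *m invmx Rm).
Proof.
move=> li [Lam [_ HU]] [d ->] uR.
have HS := ups_eq Sb Rm Lam HU.
have comb : forall v : 'rV[R]_k,
    (\sum_j v 0 j *: Sb j) *m Rm = \sum_i (v *m Lam^T) 0 i *: Sb i.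
  move=> v; rewrite mulmx_suml.
  under eq_bigr do rewrite -scalemxAl HS scaler_sumr.
  rewrite exchange_big /=; apply: eq_bigr => i _.
  rewrite mxE scaler_suml; apply: eq_bigr => j _; rewrite scalerA [Lam^T _ _]mxE.
  by [].
have uL : Lam^T \in unitmx.
  rewrite unitmxE unitfE; apply/negP => /det0P [w wn0 wL].
  have h0 : (\sum_j w 0 j *: Sb j) *m Rm = 0.
    by rewrite comb wL; apply: big1 => i _; rewrite entry0 scale0r.
  have : \sum_j w 0 j *: Sb j = 0 by rewrite -(mulmxK uR (\sum_j _)) h0 mul0mx.
  move/(li (fun j => w 0 j)) => hw.
  move: wn0; suff -> : w = 0 by rewrite eqxx.
  by apply/matrixP => a b; rewrite (ord1 a) entry0; exact: hw.
pose v := \row_j d j *m invmx Lam^T.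
exists (fun j => v 0 j).
have <- : (\sum_j v 0 j *: Sb j) *m Rm = \sum_i d i *: Sb i.
  by rewrite comb /v mulmxKV //; apply: eq_bigr => i _; rewrite mxE.
by rewrite mulmxK.
Qed.


Lemma sigma_star {n m T} (Xm : 'M[R]_(n, T)) (Um : 'M[R]_(m, T)) (Xp : 'M[R]_(n, T))
  (Astar : 'M[R]_n) (Bstar : 'M[R]_(n, m)) (Wm : 'M[R]_(n, T)) (Phi : 'M[R]_(n + T)) :
  Xp = Astar *m Xm + Bstar *m Um + Wm ->
  psdmx ((col_mx (1%:M : 'M[R]_n) Wm^T)^T *m Phi *m col_mx (1%:M : 'M[R]_n) Wm^T) ->
  SigmaD Xm Um Xp Phi Astar Bstar.
Proof.
move=> hX hW; rewrite /SigmaD /Psimx.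
set IAB := row_mx (row_mx 1%:M Astar) Bstar.
have e : IAB *m datamx Xm Um Xp = (col_mx (1%:M : 'M[R]_n) Wm^T)^T.
  rewrite /IAB /datamx tr_col_mx trmx1 trmxK !mul_row_col !mul_mx_row mul1mx
    !mulmx0 !add_row_mx !addr0 hX; congr row_mx.
  rewrite !mulmxN; apply/eqP; rewrite !subr_eq; apply/eqP.
  by rewrite mul1mx; apply/matrixP => i j; rewrite !entryD; lra.
have e2 : IAB *m (datamx Xm Um Xp *m Phi *m (datamx Xm Um Xp)^T) *m IAB^T
   = (IAB *m datamx Xm Um Xp) *m Phi *m (IAB *m datamx Xm Um Xp)^T.
  by rewrite trmx_mul !mulmxA.
by rewrite e2 e trmxK.
Qed.

End Helpers.

Theorem theorem1 (R : realType) (n m q z T k : nat)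
  (Xm : 'M[R]_(n, T)) (Um : 'M[R]_(m, T)) (Xp : 'M[R]_(n, T))
  (Astar : 'M[R]_n) (Bstar : 'M[R]_(n, m)) (Wm : 'M[R]_(n, T))
  (Phi : 'M[R]_(n + T))
  (C : 'M[R]_(q, n)) (D : 'M[R]_(q, m)) (E : 'M[R]_(n, z))
  (Sb : 'I_k -> 'M[R]_(m, n))
  (P : 'M[R]_n) (Q : 'M[R]_q) (Rm : 'M[R]_n) (L : 'M[R]_(m, n))
  (alpha beta gstar : R) :
  Xp = Astar *m Xm + Bstar *m Um + Wm ->
  symmx Phi ->
  psdmx (ulsubmx Phi) ->
  ndmx (drsubmx Phi) ->
  psdmx ((col_mx (1%:M : 'M[R]_n) Wm^T)^T *m Phi *m col_mx (1%:M : 'M[R]_n) Wm^T) ->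
  linindep Sb ->
  sdp_feasible Xm Um Xp Phi C D E Sb P Q Rm L alpha beta gstar ->
  (forall (P' : 'M[R]_n) (Q' : 'M[R]_q) (R' : 'M[R]_n) (L' : 'M[R]_(m, n))
          (alpha' beta' gamma' : R),
      sdp_feasible Xm Um Xp Phi C D E Sb P' Q' R' L' alpha' beta' gamma' ->
      gstar <= gamma') ->
  spanmx Sb (L *m invmx Rm) /\
  (forall (A : 'M[R]_n) (B : 'M[R]_(n, m)),
      SigmaD Xm Um Xp Phi A B ->
      H2_subopt A B C D E (L *m invmx Rm) gstar).
Proof.
move=> hX _ _ _ hW li feas _.
case: feas => -[sP sQ hU hL] [h1 h2 hQ [a0 b0 g0]].
have sig0 := sigma_star _ _ _ _ _ _ _ hX hW.
have [pos uR] := lmi_pos _ _ _ _ _ b0 (lmi_big _ _ _ _ _ _ _ _ _ a0 sig0 h1).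
have pP : forall v, 0 <= qf v P.
  move=> v; apply: le_trans (pos v); apply: mulr_ge0; [exact: ltW | exact: sqn_ge0].
set K := L *m invmx Rm.
have KR : K *m Rm = L by rewrite /K mulmxKV.
split; first exact: (span_inv _ _ _ li hU hL uR).
move=> A B hS.
have hb := lmi_big _ _ _ _ _ _ _ _ _ a0 hS h1.
have eG : (A + B *m K) *m Rm = A *m Rm + B *m L by rewrite mulmxDl -mulmxA KR.
rewrite -eG in hb.
have st := schur_step _ _ _ _ hb sP pP uR.
have hst : forall x, qf x ((A + B *m K) *m P *m (A + B *m K)^T + E *m E^T) <= qf x P.
  move=> x; have := st x; rewrite !qfD !qfN qf_scal.
  have := mulr_ge0 (ltW b0) (sqn_ge0 x); lra.
have hSt := stein _ _ _ pP hst.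
have eN : (C + D *m K) *m Rm = C *m Rm + D *m L by rewrite mulmxDl -mulmxA KR.
have hc : forall x y, 0 <= qf (col_mx x y) (block_mx Q ((C + D *m K) *m Rm)
              ((C + D *m K) *m Rm)^T (Rm + Rm^T - P)).
  by move=> x y; rewrite eN; exact: h2.2.
have sc := schur_step _ _ _ _ hc sP pP uR.
split => //.
rewrite /H2norm_sq.
pose M j := (C + D *m K) *m (A + B *m K) ^+ j *m E.
have tr0 : forall j, 0 <= \tr ((M j)^T *m M j).
  move=> j; rewrite mxtrace_mulC.
  have := trace_le (0 : 'M[R]_q) (M j *m (M j)^T) (fun x => _).
  rewrite mxtrace0; apply.
  move=> x; rewrite /qf mulmx0 mul0mx entry0; exact: qf_gram.
have bnd : forall N, \sum_(j < N) \tr ((M j)^T *m M j) <= gstar ^+ 2.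
  move=> N; apply: le_trans hQ.
  under eq_bigr do rewrite mxtrace_mulC.
  rewrite -raddf_sum.
  apply: trace_le => x; rewrite qf_sum.
  have e : forall j : 'I_N, qf x (M j *m (M j)^T) = qf ((C + D *m K)^T *m x)
      ((A + B *m K) ^+ j *m E *m ((A + B *m K) ^+ j *m E)^T).
    by move=> j; rewrite /M /qf !trmx_mul !trmxK !mulmxA.
  under eq_bigr do rewrite e.
  rewrite -qf_sum; apply: le_trans (hSt N _) _.
  rewrite -qf_mul; exact: sc.
apply: lime_le.
  by apply: is_cvg_nneseries => j _ _; rewrite lee_fin; exact: tr0.
apply: nearW => N /=; rewrite sumEFin lee_fin big_mkord; exact: bnd.
Qed.
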